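(* For integers $2\le k\le n-1$ and $0\le h\le n-k$, $\kappa_s^{(h)}(S_{n,k})$ exists and $\kappa_s^{(h)}(S_{n,k})\le n+h(k-2)-1$.
   Context: For integers $1\le k\le n-1$, let $I_n=\{1,\dots,n\}$ and $P(n,k)$ the set of $k$-permutations $p_1p_2\cdots p_k$ of distinct elements of $I_n$. The $(n,k)$-star graph $S_{n,k}$ has vertex set $P(n,k)$; a vertex $p=p_1p_2\cdots p_k$ is adjacent to (a) each vertex obtained by swapping $p_1$ with $p_i$ for $2\le i\le k$, and (b) each vertex $\alpha p_2\cdots p_k$ with $\alpha\in I_n\setminus\{p_1,\dots,p_k\}$. For a connected graph $G$ and integer $h\ge 0$, a set $S\subseteq V(G)$ is an $h$-cut ($h$-super vertex-cut) if $G-S$ is disconnected and has minimum degree at least $h$; the $h$-super connectivity $\kappa_s^{(h)}(G)$ is the minimum cardinality of an $h$-cut of $G$. Note $\kappa_s^{(0)}(G)=\kappa(G)$. *)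

(* Defs.v *)
From mathcomp Require Import all_boot.
Set Implicit Arguments. Unset Strict Implicit. Unset Printing Implicit Defensive.

(* Element j of I_n = {1..n} is represented by the ordinal j-1 : 'I_n;
   position i (1-based in the paper) is index i-1 in the tuple. *)
Definition kperm (n k : nat) := {t : k.-tuple 'I_n | uniq t}.

Definition kseq n k (p : kperm n k) : seq nat := map (@nat_of_ord n) (val p).

Definition swap0 (s : seq nat) (i : nat) : seq nat :=
  set_nth 0 (set_nth 0 s 0 (nth 0 s i)) i (nth 0 s 0).

(* adjacency of the (n,k)-star graph:
   (a) q is p with p_1 and p_i swapped, 2 <= i <= k (0-based: 1 <= i < k);
   (b) q = alpha p_2 ... p_k with alpha not among p_1,...,p_k. *)
Definition star_adj n k : rel (kperm n k) := fun p q =>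
  [exists i : 'I_k, (0 < val i) && (kseq q == swap0 (kseq p) i)]
  || ((behead (kseq q) == behead (kseq p)) && (head 0 (kseq q) \notin kseq p)).

Definition del_adj (T : finType) (adj : rel T) (S : {set T}) : rel T :=
  fun x y => [&& adj x y, x \notin S & y \notin S].

Definition disconnected_after (T : finType) (adj : rel T) (S : {set T}) : Prop :=
  exists x y, [/\ x \notin S, y \notin S & ~~ connect (del_adj adj S) x y].

Definition mindeg_after (T : finType) (adj : rel T) (S : {set T}) (h : nat) : Prop :=
  forall x, x \notin S -> h <= #|[set y | del_adj adj S x y]|.

Definition h_cut (T : finType) (adj : rel T) (h : nat) (S : {set T}) : Prop :=
  disconnected_after adj S /\ mindeg_after adj S h.

(* Main.v *)
Require Import Defs.
From mathcomp Require Import all_boot.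
From mathcomp Require Import zify.

Lemma card_le_keys (T:finType) (U:eqType) (A:{set T}) (f:T->U) (s:seq U):
  {in A &, injective f} -> (forall x, x \in A -> f x \in s) -> #|A| <= size s.
Proof.
move=> inj hs; rewrite cardE -(size_map f); apply: uniq_leq_size.
  rewrite map_inj_in_uniq ?enum_uniq //.
  by move=> x y; rewrite !mem_enum; apply: inj.
by move=> u /mapP [x]; rewrite mem_enum => xA ->; apply: hs.
Qed.

Lemma keys_le_card (T:finType)(U:eqType)(B:{set T})(f:T->U)(s:seq U):
 uniq s -> (forall u, u \in s -> exists2 y, y \in B & f y = u) -> size s <= #|B|.
Proof.
move=> us hs; rewrite cardE -(size_map f); apply: uniq_leq_size => // u /hs [y yB <-].
by apply: map_f; rewrite mem_enum.
Qed.

Definition valid n k (t : seq nat) := [&& size t == k, uniq t & all (fun x => x < n) t].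

Lemma kseq_valid n k (p : kperm n k) : valid n k (kseq p).
Proof.
rewrite /valid /kseq size_map size_tuple eqxx /=; apply/andP; split.
  by rewrite map_inj_uniq; [exact: (valP p) | exact: val_inj].
by apply/allP => x /mapP [y _ ->].
Qed.

Lemma kseq_inj n k : injective (@kseq n k).
Proof.
move=> p q /(inj_map val_inj) H.
by apply: val_inj; apply: val_inj.
Qed.

Lemma mk_vertex n k t : 0 < n -> valid n k t -> exists p : kperm n k, kseq p = t.
Proof.
move=> n0; case/and3P => /eqP st ut /allP at_.
case: n n0 at_ => [|n] // _ at_.
pose u := map (fun x => inord x : 'I_n.+1) t.
have su : size u == k by rewrite size_map st.
have mu : map (@nat_of_ord _) u = t.
  rewrite -map_comp -[RHS]map_id; apply/eq_in_map => x xt /=.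
  by rewrite inordK //; apply: at_.
have uu : uniq (Tuple su).
  by rewrite /= -(map_inj_uniq val_inj) mu.
by exists (exist _ (Tuple su) uu); rewrite /kseq /= mu.
Qed.

Lemma nth_swap0 (s : seq nat) i j : nth 0 (swap0 s i) j =
  if j == i then nth 0 s 0 else if j == 0 then nth 0 s i else nth 0 s j.
Proof. by rewrite /swap0 nth_set_nth /= nth_set_nth. Qed.

Lemma size_swap0 (s : seq nat) i : i < size s -> size (swap0 s i) = size s.
Proof.
move=> lt; rewrite /swap0 !size_set_nth.
lia.
Qed.

Lemma valid_swap0 n k s i : valid n k s -> 0 < i < k -> valid n k (swap0 s i).
Proof.
case/and3P => /eqP st us als /andP [i0 ik].
have ss : size (swap0 s i) = k by rewrite size_swap0 st.
rewrite /valid ss eqxx /=; apply/andP; split.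
  pose tr j := if j == i then 0 else if j == 0 then i else j.
  have trE j : nth 0 (swap0 s i) j = nth 0 s (tr j).
    by rewrite nth_swap0 /tr; case: ifP => //; case: ifP.
  have trk j : j < k -> tr j < k.
    by move=> jk; rewrite /tr; case: ifP => _; [lia|]; case: ifP => _; lia.
  have trI a b : tr a = tr b -> a = b.
    by rewrite /tr; case: (a =P i); case: (a =P 0); case: (b =P i); case: (b =P 0); lia.
  apply/(uniqP 0) => a b; rewrite !inE ss => ak bk; rewrite !trE.
  move/(uniqP 0): us; rewrite st => inj E; apply: trI; apply: inj => //;
    rewrite inE; exact: trk.
apply/(all_nthP 0) => j; rewrite ss => jk; rewrite nth_swap0.
move/(all_nthP 0): als; rewrite st => al.
by case: ifP => _; [|case: ifP => _]; apply: al; lia.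
Qed.

Arguments kseq_valid {n k}.
Arguments kseq_inj {n k}.
Arguments mk_vertex {n k}.
Arguments valid_swap0 {n k}.

Section Main.
Variables n k h : nat.
Hypotheses (k2 : 2 <= k) (kn : k <= n - 1) (hnk : h <= n - k).

Definition hd (q : seq nat) := nth 0 q 0.
Definition sufS (q : seq nat) := [forall j : 'I_k, (0 < j) ==> (nth 0 q j == j.-1)].
Definition offS2 (q : seq nat) i :=
  [forall j : 'I_k, ((0 < j) && (j != i :> nat)) ==> (nth 0 q j == j.-1)].
Definition inX q := sufS q && (k.-1 <= hd q <= k.-1 + h).
Definition inS1 q := sufS q && (k.-1 + h < hd q).
Definition inS2 q := [&& hd q < k.-1, k.-1 <= nth 0 q (hd q).+1 <= k.-1 + h
   & offS2 q (hd q).+1].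
Definition inS q := inS1 q || inS2 q.

Lemma sufSP q : reflect (forall j, 0 < j < k -> nth 0 q j = j.-1) (sufS q).
Proof.
apply: (iffP forallP) => H.
  move=> j /andP [j0 jk]; move: (H (Ordinal jk)) => /=; rewrite j0 /=; exact: eqP.
by move=> j; apply/implyP => j0; apply/eqP; apply: H; rewrite j0 ltn_ord.
Qed.

Lemma offS2P q i : reflect (forall j, 0 < j < k -> j != i -> nth 0 q j = j.-1) (offS2 q i).
Proof.
apply: (iffP forallP) => H.
  move=> j /andP [j0 jk] ji; move: (H (Ordinal jk)) => /=; rewrite j0 ji /=; exact: eqP.
by move=> j; apply/implyP => /andP [j0 ji]; apply/eqP; apply: H; rewrite ?j0 ?ltn_ord.
Qed.

Lemma adj_swap (p q : kperm n k) i : 0 < i < k -> kseq q = swap0 (kseq p) i -> star_adj p q.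
Proof.
case/andP => i0 ik E; apply/orP; left; apply/existsP; exists (Ordinal ik).
by rewrite /= i0 E eqxx.
Qed.

Lemma adj_clique (p q : kperm n k) :
  (forall j, 0 < j < k -> nth 0 (kseq q) j = nth 0 (kseq p) j) ->
  hd (kseq q) \notin kseq p -> star_adj p q.
Proof.
move=> E nh; apply/orP; right; rewrite -nth0 nh andbT.
have [/and3P [/eqP sp _ _] /and3P [/eqP sq _ _]] := (kseq_valid p, kseq_valid q).
apply/eqP; apply: (eq_from_nth (x0 := 0)); first by rewrite !size_behead sp sq.
move=> j; rewrite size_behead sq => jk; rewrite !nth_behead; apply: E; lia.
Qed.

Lemma adjE (p q : kperm n k) : star_adj p q ->
  (exists i, 0 < i < k /\ kseq q = swap0 (kseq p) i) \/
  ((forall j, 0 < j < k -> nth 0 (kseq q) j = nth 0 (kseq p) j) /\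
   hd (kseq q) \notin kseq p).
Proof.
case/orP => [/existsP [i /andP [i0 /eqP E]]|/andP [/eqP E nh]].
  by left; exists i; rewrite i0 ltn_ord.
right; split; last by rewrite /hd nth0.
move=> j /andP [j0 jk]; case: j j0 jk => [|j] // _ _.
by rewrite -!nth_behead E.
Qed.

Lemma vsize {t} : valid n k t -> size t = k.
Proof. by case/and3P => /eqP. Qed.

Lemma vmem {t j} : valid n k t -> j < k -> nth 0 t j \in t.
Proof. by move=> v jk; apply: mem_nth; rewrite (vsize v). Qed.

Lemma closeX (p q : kperm n k) : inX (kseq p) -> star_adj p q ->
  ~~ inS (kseq q) -> inX (kseq q).
Proof.
case/andP => /sufSP sP hP /adjE [[i [/andP [i0 ik] E]] | [E nh]] nS.
  exfalso; move: nS; rewrite /inS negb_or => /andP [_ /negP]; apply.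
  have hq : hd (kseq q) = i.-1.
    rewrite /hd E nth_swap0 (_ : (0 == i) = false) ?eqxx; last by lia.
    by rewrite sP // i0.
  rewrite /inS2 hq (_ : i.-1.+1 = i); last by lia.
  have qi : nth 0 (kseq q) i = hd (kseq p) by rewrite E nth_swap0 eqxx.
  apply/and3P; split; first by lia.
    by rewrite qi.
  apply/offS2P => j /andP [j0 jk] ji; rewrite E nth_swap0 (negbTE ji).
  by rewrite (_ : (j == 0) = false) ?sP ?j0 //; lia.
have sQ : sufS (kseq q) by apply/sufSP => j jk; rewrite E // sP.
rewrite /inX sQ /=.
have h1 : k.-1 <= hd (kseq q).
  rewrite leqNgt; apply/negP => lt; move: nh.
  have hk : (hd (kseq q)).+1 < k by lia.
  have := vmem (kseq_valid p) hk; rewrite sP /=; [by move=> -> | lia].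
rewrite h1 /=; move: nS; rewrite /inS /inS1 sQ /=; lia.
Qed.

Lemma n0 : 0 < n. Proof. lia. Qed.

Lemma sufS_ext q q' : (forall j, 0 < j -> nth 0 q j = nth 0 q' j) -> sufS q = sufS q'.
Proof.
move=> E; apply/sufSP/sufSP => H j jk; rewrite ?E -?H //; try lia; rewrite E //; lia.
Qed.

Lemma sufS_cons b : sufS (b :: iota 0 k.-1).
Proof. by apply/sufSP => -[|j] //= jk; rewrite nth_iota //; lia. Qed.

Lemma sufS_eq {t} : valid n k t -> sufS t -> t = hd t :: iota 0 k.-1.
Proof.
move=> v /sufSP sP; apply: (eq_from_nth (x0 := 0)); first by rewrite (vsize v) /= size_iota; lia.
move=> [|j] //; rewrite (vsize v) => jk /=; rewrite nth_iota ?sP //; lia.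
Qed.

Lemma sufS_hd t : valid n k t -> sufS t -> k.-1 <= hd t.
Proof.
move=> v sS; have := v; rewrite {1}(sufS_eq v sS) => /and3P [_ /= /andP [+ _] _].
by rewrite mem_iota; lia.
Qed.

Lemma valid_cons b : k.-1 <= b < n -> valid n k (b :: iota 0 k.-1).
Proof.
move=> bb; rewrite /valid; apply/and3P; split.
- by rewrite /= size_iota; apply/eqP; lia.
- by rewrite /= iota_uniq mem_iota andbT; lia.
- by apply/allP => x; rewrite inE mem_iota => /orP [/eqP ->|]; lia.
Qed.

Lemma valid_behead t b : valid n k t -> b < n -> b \notin t -> valid n k (b :: behead t).
Proof.
case: t => [|c t] /and3P [/eqP st ut at_] bn bt; first by move: st => /= st; lia.
move: ut at_ bt => /= /andP [_ ut] /andP [_ at_]; rewrite inE negb_or => /andP [_ bt].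
by rewrite /valid /= -st eqxx bt ut bn at_.
Qed.

Lemma vlt {t j} : valid n k t -> j < k -> nth 0 t j < n.
Proof. by move=> v jk; move: (v) => /and3P [_ _ /allP]; apply; apply: vmem. Qed.

Definition Sset := [set p : kperm n k | inS (kseq p)].

Lemma reachX (x y : kperm n k) : inX (kseq x) ->
  connect (del_adj (@star_adj n k) Sset) x y -> inX (kseq y).
Proof.
move=> xX /connectP [pth]; elim: pth x xX => [|z pth IH] x xX /=; first by move=> _ ->.
case/andP => /and3P [a _ zS] pz ey; apply: IH pz ey.
by apply: closeX xX a _; move: zS; rewrite inE.
Qed.

Lemma disc : disconnected_after (@star_adj n k) Sset.
Proof.
have [x0 ex] := mk_vertex (k.-1 :: iota 0 k.-1) n0 (valid_cons (k.-1) ltac:(lia)).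
have vy : valid n k (k.-1 :: k :: iota 1 (k - 2)).
  rewrite /valid; apply/and3P; split.
  - by rewrite /= size_iota; apply/eqP; lia.
  - rewrite /= iota_uniq !inE !mem_iota andbT negb_or; apply/andP; split; lia.
  - by apply/allP => x; rewrite !inE mem_iota => /orP [/eqP ->|/orP [/eqP ->|]]; lia.
have [y0 ey] := mk_vertex _ n0 vy.
have nsy : ~~ sufS (k.-1 :: k :: iota 1 (k - 2)).
  by apply/sufSP => H; move: (H 1 ltac:(lia)) => /=; lia.
have xX : inX (kseq x0) by rewrite ex /inX sufS_cons /hd /=; lia.
exists x0, y0; split.
- rewrite inE ex /inS /inS1 /inS2 /hd /= ltnn /= orbF.
  by apply/negP => /andP [_]; lia.
- by rewrite inE ey /inS /inS1 /inS2 /hd /= ltnn /= orbF (negbTE nsy).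
- by apply/negP => /(reachX _ _ xX); rewrite ey /inX (negbTE nsy).
Qed.

Lemma notS_cons b : k.-1 <= b <= k.-1 + h -> ~~ inS (b :: iota 0 k.-1).
Proof.
move=> bb; rewrite /inS /inS1 /inS2 /hd /=; apply/norP; split.
  by apply/nandP; right; lia.
by apply/and3P => -[]; lia.
Qed.

Lemma degX x : inX (kseq x) -> h <= #|[set y | del_adj (@star_adj n k) Sset x y]|.
Proof.
move=> xX; have vx := kseq_valid x; have /andP [sX hX] := xX.
have EX := sufS_eq vx sX; move: EX hX; set a := hd (kseq x) => EX hX.
set L := filter (predC1 a) (iota k.-1 h.+1).
have sL : size L = h.
  have := count_predC (pred1 a) (iota k.-1 h.+1).
  rewrite count_uniq_mem ?iota_uniq // mem_iota size_iota size_filter.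
  rewrite (_ : k.-1 <= a < k.-1 + h.+1); last by lia.
  move=> E; rewrite (@eq_count _ (predC1 a) (predC (pred1 a))) //; lia.
apply: (leq_trans _ (keys_le_card _ _ _ (@kseq n k) (map (fun b => b :: iota 0 k.-1) L) _ _)).
- by rewrite size_map sL.
- rewrite map_inj_uniq ?filter_uniq ?iota_uniq //; by move=> b c [].
move=> u /mapP [b]; rewrite mem_filter mem_iota => /andP [bne bin] ->.
have vb : valid n k (b :: iota 0 k.-1) by apply: valid_cons; lia.
have [y ey] := mk_vertex _ n0 vb; exists y => //.
rewrite inE /del_adj; apply/and3P; split.
- apply: adj_clique.
    by move=> j /andP [j0 jk]; rewrite ey EX; case: j j0 jk.
  rewrite ey EX /hd /= inE mem_iota negb_or; apply/andP; split; [exact: bne | lia].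
- by rewrite inE EX notS_cons.
- by rewrite inE ey notS_cons //; lia.
Qed.

Lemma degN x : ~~ inS (kseq x) -> ~~ inX (kseq x) ->
  h <= #|[set y | del_adj (@star_adj n k) Sset x y]|.
Proof.
move=> xS xX; have vx := kseq_valid x.
have xS' : x \notin Sset by rewrite inE.
set X := kseq x in xS xX vx xS' *.
set t := behead X.
set C := filter (fun b => b \notin X) (iota 0 n).
have uC : uniq C by rewrite filter_uniq ?iota_uniq.
have sC : size C = n - k.
  have pe : perm_eq (filter (mem X) (iota 0 n)) X.
    apply: uniq_perm; first by rewrite filter_uniq ?iota_uniq.
      by case/and3P: vx.
    move=> z; rewrite mem_filter mem_iota /=.
    case zX: (z \in X) => //=; case/and3P: vx => _ _ /allP /(_ z zX); lia.
  have := count_predC (mem X) (iota 0 n).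
  rewrite -size_filter (perm_size pe) size_iota (vsize vx) /C size_filter.
  move=> E; rewrite (@eq_count _ _ (predC (mem X))) //; lia.
have nthbt b j : 0 < j -> nth 0 (b :: t) j = nth 0 X j.
  by case: j => [|j] // _; rewrite /= /t nth_behead.
have key b : b \in C -> exists2 y, kseq y = b :: t &
   (star_adj x y /\ ~~ inS1 (b :: t)).
  rewrite mem_filter mem_iota => /andP [bX bn].
  have vb : valid n k (b :: t) by apply: valid_behead => //; lia.
  have [y ey] := mk_vertex _ n0 vb; exists y => //; split.
    by apply: adj_clique; [move=> j /andP [j0 _]; rewrite ey nthbt | rewrite ey].
  apply/negP => /andP [sb _].
  have sX : sufS X by rewrite -(sufS_ext (b :: t)) // => j /nthbt.
  have := sufS_hd _ vx sX; move: xS xX; rewrite /inS /inS1 /inX sX /=; lia.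
case: (boolP (has (fun b => inS2 (b :: t)) C)) => [/hasP [b0 b0C Sb0] | /hasPn noS2].
  move: (Sb0) => /and3P [hb0 alph /offS2P off]; move: hb0 alph off.
  rewrite /hd /= /t nth_behead => hb0 alph off.
  have b0X : b0 \notin X by move: b0C; rewrite mem_filter => /andP [].
  have other b : b \in C -> b != b0 -> ~~ inS2 (b :: t).
    move=> _ bb0; apply/negP => /and3P [hb _ /offS2P offb]; move: hb offb.
    rewrite /hd /= => hb offb.
    have := offb b0.+1 ltac:(lia) ltac:(by rewrite eqSS eq_sym).
    rewrite nthbt //=; lia.
  have ik : 0 < b0.+1 < k by lia.
  have vz := valid_swap0 X b0.+1 vx ik.
  have [z ez] := mk_vertex _ n0 vz.
  have zi : nth 0 (swap0 X b0.+1) b0.+1 = nth 0 X 0 by rewrite nth_swap0 eqxx.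
  have z0 : nth 0 (swap0 X b0.+1) 0 = nth 0 X b0.+1 by rewrite nth_swap0.
  have X0 : nth 0 X 0 \in X by apply: vmem vx _; lia.
  have zS : ~~ inS (swap0 X b0.+1).
    rewrite /inS /inS1 /inS2 /hd z0 negb_or; apply/andP; split.
      apply/nandP; left; apply/negP => /sufSP /(_ b0.+1 ik); rewrite zi /= => E.
      by move: X0 b0X; rewrite E => ->.
    apply/negP => /and3P [+ _ _]; lia.
  set L := swap0 X b0.+1 :: map (fun b => b :: t) (filter (predC1 b0) C).
  apply: (leq_trans _ (keys_le_card _ _ _ (@kseq n k) L _ _)).
  - rewrite /L /= size_map size_filter.
    have := count_predC (pred1 b0) C; rewrite count_uniq_mem // b0C.
    move=> E; rewrite (@eq_count _ (predC1 b0) (predC (pred1 b0))) //; lia.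
  - rewrite /L /= map_inj_uniq ?filter_uniq ?iota_uniq //; last by move=> ? ? [].
    rewrite andbT; apply/mapP => -[b _ E].
    have := congr1 (fun s => nth 0 s b0.+1) E; rewrite zi nthbt // => E2.
    case/and3P: (vx) => _ uX _; move/(uniqP 0): uX => inj.
    have := inj 0 b0.+1; rewrite !inE (vsize vx) => H.
    by move: (H ltac:(lia) ltac:(lia) E2).
  move=> u; rewrite inE => /orP [/eqP -> | /mapP [b]].
    exists z; last by [].
    by rewrite inE /del_adj xS' (adj_swap _ _ _ ik ez) inE ez zS.
  rewrite mem_filter => /andP [bb0 bC] ->.
  have [y ey [axy nS1]] := key b bC.
  exists y => //; rewrite inE /del_adj xS' axy inE ey /inS negb_or nS1.
  exact: other.
apply: (leq_trans _ (keys_le_card _ _ _ (@kseq n k) (map (fun b => b :: t) C) _ _)).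
- by rewrite size_map sC.
- by rewrite map_inj_uniq //; move=> ? ? [].
move=> u /mapP [b bC ->].
have [y ey [axy nS1]] := key b bC.
exists y => //; rewrite inE /del_adj xS' axy inE ey /inS negb_or nS1.
exact: noS2.
Qed.

Lemma cardS : #|Sset| <= (n - k - h) + k.-1 * h.+1.
Proof.
have -> : Sset = [set p | inS1 (kseq p)] :|: [set p | inS2 (kseq p)].
  by apply/setP => p; rewrite !inE.
rewrite cardsU; apply: leq_trans (leq_subr _ _) _; apply: leq_add.
  rewrite -(size_iota (k + h) (n - k - h)).
  apply: (card_le_keys _ _ _ (fun p => hd (kseq p))).
    move=> p q; rewrite !inE => /andP [sp _] /andP [sq _] E; apply: kseq_inj.
    by rewrite (sufS_eq (kseq_valid p) sp) (sufS_eq (kseq_valid q) sq) E.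
  move=> p; rewrite inE mem_iota => /andP [_ hp].
  have := vlt (kseq_valid p) (_ : 0 < k); rewrite -/(hd _); lia.
rewrite -(size_iota 0 k.-1) -(size_iota k.-1 h.+1) -(size_allpairs pair).
apply: (card_le_keys _ _ _ (fun p => (hd (kseq p), nth 0 (kseq p) (hd (kseq p)).+1))).
  move=> p q; rewrite !inE => /and3P [_ _ /offS2P op] /and3P [_ _ /offS2P oq] [E1 E2].
  apply: kseq_inj; apply: (eq_from_nth (x0 := 0)).
    by rewrite (vsize (kseq_valid p)) (vsize (kseq_valid q)).
  move=> j; rewrite (vsize (kseq_valid p)) => jk.
  case: (j =P 0) => [-> | /eqP j0]; first exact: E1.
  case: (j =P (hd (kseq p)).+1) => [-> | /eqP jh]; first by rewrite E2 E1.
  rewrite op ?oq -?E1 //; lia.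
move=> p; rewrite inE => /and3P [hp ap _].
by apply: allpairs_f; rewrite mem_iota; lia.
Qed.

End Main.

Theorem lemma3p1 (n k h : nat) :
  2 <= k -> k <= n - 1 -> h <= n - k ->
  exists S : {set kperm n k},
    h_cut (@star_adj n k) h S /\ #|S| <= n + h * (k - 2) - 1.
Proof.
move=> k2 kn hnk; exists (Sset n k h); split; first split.
- exact: (disc n k h k2 kn hnk).
- move=> x; rewrite inE => xS.
  case: (boolP (inX k h (kseq x))) => xX; first exact: (degX n k h k2 kn hnk).
  exact: (degN n k h k2 kn hnk).
apply: leq_trans (cardS n k h k2 kn hnk) _.
case: k k2 kn hnk => [|[|k]] // _ kn hnk.
rewrite /= mulnS; lia.
Qed.
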